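(* Let $m,n\in\mathbb N$, $p\in(0,1)$, $\pi\in(0,1/2)$, and let $R\in\mathbb F_2^{m\times n}$ be a random matrix with mutually independent columns, each column being zero with probability $1-p$ and otherwise consisting of i.i.d. $\mathrm{Bern}(\pi)$ entries. For $1\le k\le n$ let $x_k\in\mathbb F_2^n$ have exactly $k$ ones. Then $$\mathbb P(Rx_k=0)\le 2^{-m}\Bigl[1+\exp(-kp\pi)+2\exp\Bigl(-\tfrac kmD\bigl(\tfrac p2;p\bigr)\Bigr)\Bigr]^m.$$ In addition, $$\mathbb P(Rx_k=0)\le e^{-kmp\pi/4}\quad\text{for all } 1\le k\le k^*,$$ where $k^*=\max\bigl\{k:\ (1-2\pi)^k\ge\tfrac12\text{ and }\bigl(1-\tfrac{\pi k}{2}\bigr)^m\ge\tfrac12\bigr\}$.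
   Context: $D(q;p)=q\log\frac qp+(1-q)\log\frac{1-q}{1-p}$ is the Kullback–Leibler divergence of $\mathrm{Bern}(q)$ from $\mathrm{Bern}(p)$. Arithmetic in $Rx_k$ is over $\mathbb F_2$. *)

(* Defs.v *)
From HB Require Import structures.
From mathcomp Require Import all_boot all_order all_algebra.
From mathcomp.reals Require Import reals.
From mathcomp.analysis Require Import sequences exp.
Set Implicit Arguments. Unset Strict Implicit. Unset Printing Implicit Defensive.
Import Order.TTheory GRing.Theory Num.Theory.
Local Open Scope ring_scope.

Definition cweight (m : nat) (c : 'cV['F_2]_m) : nat :=
  #|[set i | c i ord0 != 0]|.

(* Law of one column: zero with prob. 1-p, otherwise i.i.d. Bern(pi) entries
   (i.e. the mixture (1-p) delta_0 + p Bern(pi)^{m}). *)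
Definition col_prob (R : realType) (m : nat) (p pi : R) (c : 'cV['F_2]_m) : R :=
  (1 - p) * (c == 0)%:R + p * (pi ^+ cweight c * (1 - pi) ^+ (m - cweight c)).

Definition mat_prob (R : realType) (m n : nat) (p pi : R) (M : 'M['F_2]_(m, n)) : R :=
  \prod_(j < n) col_prob p pi (col j M).

Definition prob_kernel (R : realType) (m n : nat) (p pi : R) (x : 'cV['F_2]_n) : R :=
  \sum_(M : 'M['F_2]_(m, n) | M *m x == 0) mat_prob p pi M.

Definition KL (R : realType) (q p : R) : R :=
  q * ln (q / p) + (1 - q) * ln ((1 - q) / (1 - p)).

Definition kstar_cond (R : realType) (m : nat) (pi : R) (k : nat) : Prop :=
  (1 - 2 * pi) ^+ k >= 1/2 /\ (1 - pi * k%:R / 2) ^+ m >= 1/2.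

(* Main.v *)
Require Import Defs.
From HB Require Import structures.
From mathcomp Require Import all_boot all_order all_algebra.
From mathcomp.reals Require Import reals.
From mathcomp.analysis Require Import sequences exp.
From mathcomp Require Import zify ring lra.
Import Order.TTheory GRing.Theory Num.Theory.
Set Implicit Arguments. Unset Strict Implicit. Unset Printing Implicit Defensive.
Local Open Scope ring_scope.

Lemma F2_cases (b : 'F_2) : b = 0 \/ b = 1.
Proof. case: b => [[|[|//]]] Hb; [left|right]; exact: val_inj. Qed.
Lemma F2_11 : (1 + 1 : 'F_2) = 0. Proof. by apply: val_inj. Qed.
Lemma F2_10 : (1 : 'F_2) != 0. Proof. by []. Qed.
Lemma sumF2 (R : nmodType) (h : 'F_2 -> R) : \sum_b h b = h 0 + h 1.
Proof. rewrite (bigD1 0) //= (bigD1 1) //= big1 ?addr0 // => b /andP[H0 H1].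
by case: (F2_cases b) H0 H1 => ->; rewrite eqxx. Qed.

Section Comb.
Variable R : comNzRingType.

Lemma sum_cols (m n : nat) (F : 'I_n -> 'cV['F_2]_m -> R) :
  \sum_(M : 'M['F_2]_(m, n)) \prod_j F j (col j M) = \prod_j \sum_c F j c.
Proof.
rewrite bigA_distr_bigA /=.
rewrite [LHS](reindex (fun f : {ffun 'I_n -> 'cV['F_2]_m} => \matrix_(i, j) f j i ord0)) /=.
  apply: eq_bigr => f _; apply: eq_bigr => j _; congr F.
  by apply/matrixP => i l; rewrite !mxE (ord1 l).
exists (fun M : 'M['F_2]_(m, n) => [ffun j => col j M]) => [f _|M _].
  by apply/ffunP => j; rewrite ffunE; apply/matrixP => i l; rewrite !mxE (ord1 l).
by apply/matrixP => i j; rewrite !mxE ffunE mxE.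
Qed.

Lemma sum_entries (m : nat) (F : 'I_m -> 'F_2 -> R) :
  \sum_(c : 'cV['F_2]_m) \prod_i F i (c i ord0) = \prod_i \sum_b F i b.
Proof.
rewrite bigA_distr_bigA /=.
rewrite [LHS](reindex (fun f : {ffun 'I_m -> 'F_2} => \col_i f i)) /=.
  by apply: eq_bigr => f _; apply: eq_bigr => j _; rewrite mxE.
exists (fun c : 'cV['F_2]_m => [ffun i => c i ord0]) => [f _|c _].
  by apply/ffunP => j; rewrite ffunE mxE.
by apply/matrixP => i l; rewrite !mxE ffunE (ord1 l).
Qed.

Lemma prod_if (m : nat) (c : 'cV['F_2]_m) (a b : R) :
  \prod_i (if c i ord0 == 0 then a else b) = b ^+ cweight c * a ^+ (m - cweight c).
Proof.
rewrite (bigID (fun i => c i ord0 == 0)) /=.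
rewrite [X in X * _](eq_bigr (fun _ => a)); last by move=> i ->.
rewrite [X in _ * X](eq_bigr (fun _ => b)); last by move=> i /negbTE ->.
rewrite mulrC.
rewrite !prodr_const /cweight; congr (_ ^+ _ * _ ^+ _).
  by apply: eq_card => i; rewrite inE.
have H : (#|[set i | c i ord0 == 0%R]| + #|[set i | c i ord0 != 0%R]| = m)%N.
  rewrite -[RHS](card_ord m) -(cardsC [set i | c i ord0 == 0%R]); congr (_ + _)%N.
  by apply: eq_card => i; rewrite !inE.
have -> : #|(fun i => c i ord0 == 0%R)| = #|[set i | c i ord0 == 0%R]| by apply: eq_card => i; rewrite !inE.
lia.
Qed.
End Comb.
Section Four.
Variable R : realType.

Definition sgn (b : 'F_2) : R := if b == 0 then 1 else -1.
Lemma sgn0 : sgn 0 = 1. Proof. by rewrite /sgn eqxx. Qed.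
Lemma sgn1 : sgn 1 = -1. Proof. by rewrite /sgn (negbTE F2_10). Qed.
Lemma sgnD a b : sgn (a + b) = sgn a * sgn b.
Proof.
case: (F2_cases a) => ->; case: (F2_cases b) => ->.
all: by rewrite ?addr0 ?add0r ?F2_11 ?sgn0 ?sgn1 ?mulrNN ?mulr1 ?mul1r.
Qed.
Lemma sgn_sum (I : finType) (f : I -> 'F_2) : sgn (\sum_i f i) = \prod_i sgn (f i).
Proof. exact: (big_morph sgn sgnD sgn0). Qed.

Lemma sum_sgn_mul (c : 'F_2) : \sum_b sgn (b * c) = if c == 0 then 2 else 0.
Proof.
rewrite sumF2 mul0r mul1r sgn0.
by case: (F2_cases c) => ->; rewrite ?sgn0 ?sgn1 ?eqxx ?(negbTE F2_10) ?subrr.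
Qed.

Definition dotv m (u v : 'cV['F_2]_m) : 'F_2 := \sum_i u i ord0 * v i ord0.

Lemma char_id m (v : 'cV['F_2]_m) :
  \sum_(u : 'cV['F_2]_m) sgn (dotv u v) = 2 ^+ m * (v == 0)%:R.
Proof.
rewrite (eq_bigr (fun u : 'cV['F_2]_m => \prod_i sgn (u i ord0 * v i ord0))); last first.
  by move=> u _; rewrite /dotv sgn_sum.
rewrite (sum_entries (fun i b => sgn (b * v i ord0))).
rewrite (eq_bigr _ (fun i _ => sum_sgn_mul (v i ord0))).
have [->|nz] := eqVneq v 0.
  rewrite mulr1 (eq_bigr (fun _ => 2)) ?prodr_const ?card_ord // => i _.
  by rewrite mxE eqxx.
rewrite mulr0.
have [i Hi] : exists i, v i ord0 != 0.
  apply/existsP; apply: contraR nz => /existsPn H; apply/eqP/matrixP => i l.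
  by rewrite (ord1 l) mxE; move: (H i); rewrite negbK => /eqP.
by rewrite (bigD1 i) //= (negbTE Hi) mul0r.
Qed.

Definition wgt m (pi : R) (c : 'cV['F_2]_m) : R :=
  pi ^+ cweight c * (1 - pi) ^+ (m - cweight c).

Lemma colsum m (p pi : R) (u : 'cV['F_2]_m) :
  \sum_c col_prob p pi c * sgn (dotv u c) = 1 - p + p * (1 - 2 * pi) ^+ cweight u.
Proof.
rewrite /col_prob.
rewrite (eq_bigr (fun c : 'cV['F_2]_m => (1 - p) * ((c == 0)%:R * sgn (dotv u c)) +
   p * \prod_(i < m) ((if c i ord0 == 0 then 1 - pi else pi) * sgn (u i ord0 * c i ord0)))); last first.
  move=> c _; rewrite mulrDl -!mulrA; congr (_ + _ * _).
  by rewrite big_split /= prod_if /dotv sgn_sum mulrA.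
rewrite big_split /= -!mulr_sumr -[in RHS](mulr1 (1 - p)); congr (_ * _ + _ * _).
  rewrite (bigD1 0) //= eqxx mul1r big1 ?addr0; last by move=> c /negbTE ->; rewrite mul0r.
  by rewrite /dotv big1 ?sgn0 // => i _; rewrite mxE mulr0.
rewrite (sum_entries (fun i b => (if b == 0 then 1 - pi else pi) * sgn (u i ord0 * b))).
rewrite (eq_bigr (fun i : 'I_m => if u i ord0 == 0 then 1 else 1 - 2 * pi)).
  by rewrite prod_if expr1n mulr1.
move=> i _; rewrite sumF2 eqxx (negbTE F2_10) mulr0 mulr1 sgn0 mulr1.
by case: (F2_cases (u i ord0)) => ->; rewrite ?mul0r ?mul1r ?sgn0 ?sgn1 ?eqxx ?(negbTE F2_10) ?mulr1; lra.
Qed.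

End Four.
Section Formula.
Variable R : realType.

Lemma cweight0 m : cweight (0 : 'cV['F_2]_m) = 0%N.
Proof. rewrite /cweight; apply/eqP; rewrite cards_eq0; apply/eqP/setP => i.
by rewrite !inE mxE eqxx. Qed.

Lemma colsum_tot m (p pi : R) : \sum_(c : 'cV['F_2]_m) col_prob p pi c = 1.
Proof.
have := colsum p pi (0 : 'cV['F_2]_m); rewrite cweight0 expr0 mulr1 subrK => <-.
apply: eq_bigr => c _; rewrite /dotv big1 ?sgn0 ?mulr1 // => i _; by rewrite mxE mul0r.
Qed.

Lemma dotv_mul m n (u : 'cV['F_2]_m) (M : 'M['F_2]_(m, n)) (x : 'cV['F_2]_n) :
  dotv u (M *m x) = \sum_j x j ord0 * dotv u (col j M).
Proof.
rewrite /dotv.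
under eq_bigr do rewrite mxE mulr_sumr.
rewrite exchange_big /=; apply: eq_bigr => j _; rewrite mulr_sumr.
by apply: eq_bigr => i _; rewrite !mxE [RHS]mulrC mulrA.
Qed.

Lemma formula m n (p pi : R) (x : 'cV['F_2]_n) :
  prob_kernel m p pi x =
  2 ^- m * \sum_(u : 'cV['F_2]_m) (1 - p + p * (1 - 2 * pi) ^+ cweight u) ^+ cweight x.
Proof.
have h2 : (2 : R) ^+ m != 0 by rewrite expf_neq0 // pnatr_eq0.
rewrite /prob_kernel big_mkcond /=.
rewrite (eq_bigr (fun M : 'M['F_2]_(m, n) => 2 ^- m * \sum_(u : 'cV['F_2]_m)
     \prod_j (col_prob p pi (col j M) * sgn R (x j ord0 * dotv u (col j M))))); last first.
  move=> M _; rewrite /mat_prob.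
  rewrite (eq_bigr (fun u : 'cV['F_2]_m => mat_prob p pi M * sgn R (dotv u (M *m x)))); last first.
    by move=> u _; rewrite big_split /= dotv_mul sgn_sum.
  rewrite -mulr_sumr char_id mulrCA mulKf //.
  by case: (M *m x == 0); rewrite ?mulr1 ?mulr0.
rewrite -mulr_sumr exchange_big /=; congr (_ * _); apply: eq_bigr => u _.
rewrite (sum_cols (fun j c => col_prob p pi c * sgn R (x j ord0 * dotv u c))).
rewrite (eq_bigr (fun j : 'I_n => if x j ord0 == 0 then 1 else 1 - p + p * (1 - 2 * pi) ^+ cweight u)).
  by rewrite prod_if expr1n mulr1.
move=> j _; case: (F2_cases (x j ord0)) => ->; rewrite ?eqxx ?(negbTE F2_10).
  rewrite -(colsum_tot m p pi); apply: eq_bigr => c _; by rewrite mul0r sgn0 mulr1.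
rewrite -colsum; apply: eq_bigr => c _; by rewrite mul1r.
Qed.
End Formula.
Section Formula2.
Variable R : realType.

Lemma sum_pow m (t : R) : \sum_(u : 'cV['F_2]_m) t ^+ cweight u = (1 + t) ^+ m.
Proof.
rewrite (eq_bigr (fun u : 'cV['F_2]_m => \prod_i (if u i ord0 == 0 then 1 else t))); last first.
  by move=> u _; rewrite prod_if expr1n mulr1.
rewrite (sum_entries (fun i b => if b == 0 then 1 else t)).
rewrite (eq_bigr (fun _ => 1 + t)) ?prodr_const ?card_ord // => i _.
by rewrite sumF2 eqxx (negbTE F2_10).
Qed.

Definition qb (p : R) (k N : nat) : R := (1 - p) ^+ (k - N) * p ^+ N *+ 'C(k, N).

Lemma formula2 m n (p pi : R) (x : 'cV['F_2]_n) :
  prob_kernel m p pi x =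
  \sum_(N < (cweight x).+1) qb p (cweight x) N * ((1 + (1 - 2 * pi) ^+ N) / 2) ^+ m.
Proof.
rewrite formula; set k := cweight x; set th := 1 - 2 * pi.
under eq_bigr do rewrite exprDn.
rewrite exchange_big /= mulr_sumr; apply: eq_bigr => N _.
rewrite expr_div_n mulrA mulrC; congr (_ * _).
rewrite -(sum_pow m (th ^+ N)) mulr_sumr; apply: eq_bigr => u _.
rewrite /qb exprMn -!exprM mulnC mulrA -mulrnAl.
done.
Qed.
End Formula2.
Section Ana.
Variable R : realType.

Lemma qb_ge0 (p : R) k N : 0 <= p -> p <= 1 -> 0 <= qb p k N.
Proof. by move=> h0 h1; rewrite /qb mulrn_wge0 // mulr_ge0 // exprn_ge0 // subr_ge0. Qed.

Lemma qb_sum (p z : R) k : \sum_(N < k.+1) qb p k N * z ^+ N = (1 - p + p * z) ^+ k.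
Proof.
rewrite exprDn; apply: eq_bigr => N _; rewrite /qb exprMn mulrnAl -mulrnAr mulrA.
by rewrite -mulrnAr.
Qed.

Lemma bernoulli (x : R) N : -1 <= x -> 1 + N%:R * x <= (1 + x) ^+ N.
Proof.
move=> hx; elim: N => [|N IH]; first by rewrite mul0r addr0 expr0.
rewrite exprS; have h1 : 0 <= 1 + x by lra.
apply: le_trans (ler_wpM2l h1 IH); rewrite -natr1.
have hN : 0 <= N%:R :> R by rewrite ler0n.
have hx2 : 0 <= N%:R * (x * x) :> R by rewrite mulr_ge0 // sqr_ge0.
nra.
Qed.

Lemma G1 (a : R) N : 0 <= a -> a <= 1 -> 1/2 <= (1 - a) ^+ N ->
  N%:R * a <= 1 /\ (1 - a) ^+ N <= 1 - N%:R * a / 2.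
Proof.
move=> a0 a1 h.
have hb := bernoulli N (_ : -1 <= a); have {}hb := hb ltac:(lra).
have hp : (1 - a) ^+ N * (1 + a) ^+ N <= 1.
  rewrite -exprMn; apply: exprn_ile1; nra.
have h0 : 0 <= (1 - a) ^+ N by rewrite exprn_ge0 // subr_ge0.
have hN : 0 <= N%:R * a :> R by rewrite mulr_ge0.
have h3 : (1 - a) ^+ N * (1 + N%:R * a) <= 1.
  apply: le_trans hp; exact: ler_wpM2l.
split; nra.
Qed.

End Ana.
Section Ana2.
Variable R : realType.

Lemma powle (a b : R) n : 0 <= a -> a <= b -> a ^+ n <= b ^+ n.
Proof. move=> a0 ab; apply: lerXn2r; rewrite ?nnegrE //; exact: le_trans ab. Qed.

Lemma bound2 (p pi : R) k m : 0 < p -> p < 1 -> 0 < pi -> pi < 1/2 ->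
  1/2 <= (1 - 2 * pi) ^+ k -> 1/2 <= (1 - pi / 2) ^+ m ->
  \sum_(N < k.+1) qb p k N * ((1 + (1 - 2 * pi) ^+ N) / 2) ^+ m <=
  expR (- (k%:R * m%:R * p * pi / 4)).
Proof.
move=> p0 p1 pi0 pi1 hs ht.
have a0 : 0 <= pi / 2 by lra.
have a1 : pi / 2 <= 1 by lra.
have [hm ht'] := @G1 R (pi / 2) m a0 a1 ht.
set r := 1 - m%:R * pi / 4.
have step : forall N : 'I_k.+1, ((1 + (1 - 2 * pi) ^+ N) / 2) ^+ m <= r ^+ N.
  move=> N; have Nk : (N <= k)%N by rewrite -ltnS ltn_ord.
  have hsN : 1/2 <= (1 - 2 * pi) ^+ N.
    apply: le_trans hs _; apply: ler_wiXn2l => //; lra.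
  have b0 : 0 <= 2 * pi by lra.
  have b1 : 2 * pi <= 1 by lra.
  have [hN1 hN2] := @G1 R (2 * pi) N b0 b1 hsN.
  have b2 : -1 <= - (pi / 2) by lra.
  have hb := bernoulli N b2.
  have h0 : 0 <= (1 - 2 * pi) ^+ N by rewrite exprn_ge0 //; lra.
  apply: (@le_trans _ _ ((1 - pi / 2) ^+ N ^+ m)).
    apply: powle; first lra.
    apply: le_trans hb; lra.
  rewrite exprAC; apply: powle; first by rewrite exprn_ge0 //; lra.
  rewrite /r; lra.
apply: (@le_trans _ _ (\sum_(N < k.+1) qb p k N * r ^+ N)).
  apply: ler_sum => N _; apply: ler_wpM2l; [apply: qb_ge0; lra | exact: step].
rewrite qb_sum.
have -> : - (k%:R * m%:R * p * pi / 4) = k%:R * (- (p * m%:R * pi / 4)) :> R by ring.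
rewrite expRM_natl; apply: powle.
  have hm0 : 0 <= m%:R :> R by rewrite ler0n.
  have hmpi : 0 <= m%:R * pi by rewrite mulr_ge0 //; lra.
  have hh : 0 <= p * (2 - m%:R * pi) by rewrite mulr_ge0 //; lra.
  rewrite /r; lra.
apply: le_trans (expR_ge1Dx _); rewrite /r; lra.
Qed.
End Ana2.
Section Ana3.
Variable R : realType.

Lemma chernoff (p : R) k : 0 < p -> p < 1 ->
  \sum_(N < k.+1) (if 2 * N%:R < k%:R * p then qb p k N else 0) <= expR (- (k%:R * KL (p / 2) p)).
Proof.
move=> p0 p1.
set z := (1 - p) / (2 - p).
have z0 : 0 < z by rewrite divr_gt0 //; lra.
have z1 : z < 1 by rewrite ltr_pdivrMr; lra.
have zP : z \in Num.pos by rewrite posrE.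
have lz : ln z < 0 by apply: ln_lt0; rewrite z0.
set c := expR (- (k%:R * p / 2 * ln z)).
have ezN : forall N : nat, z ^+ N = expR (N%:R * ln z) by move=> N; rewrite expRM_natl lnK.
apply: (@le_trans _ _ (\sum_(N < k.+1) qb p k N * z ^+ N * c)).
  apply: ler_sum => N _.
  have q0 : 0 <= qb p k N by apply: qb_ge0; lra.
  have e0 : 0 <= z ^+ N * c by rewrite mulr_ge0 ?exprn_ge0 ?expR_ge0 //; lra.
  case: ifP => hc; last by rewrite -mulrA mulr_ge0.
  rewrite -mulrA -[X in X <= _]mulr1; apply: ler_wpM2l => //.
  rewrite /c ezN -expRD; apply: le_trans (expR_ge1Dx _).
  have : 0 <= (k%:R * p / 2 - N%:R) * (- ln z) by rewrite mulr_ge0 //; lra.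
  lra.
rewrite -mulr_suml qb_sum.
have -> : 1 - p + p * z = 2 * z by rewrite /z; field; lra.
have twoP : (2 : R) \in Num.pos by rewrite posrE.
rewrite (_ : (2 * z) ^+ k = expR (k%:R * ln (2 * z))); last first.
  by rewrite expRM_natl lnK // posrE mulr_gt0.
rewrite /c -expRD lnM //; rewrite ler_expR /KL.
have -> : p / 2 / p = 2^-1 by field; lra.
have -> : (1 - p / 2) / (1 - p) = (2 * z)^-1 by rewrite /z; field; lra.
rewrite lnV // lnV ?lnM // ?posrE ?mulr_gt0 //.
rewrite le_eqVlt; apply/orP; left; apply/eqP; ring.
all: rewrite ?invr_gt0; lra.
Qed.
End Ana3.
Section Ana4.
Variable R : realType.

Lemma powadd (a b : R) m : 0 <= a -> 0 <= b -> (1 <= m)%N -> a ^+ m + b ^+ m <= (a + b) ^+ m.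
Proof.
move=> a0 b0; case: m => [//|m] _; elim: m => [|m IH]; first by rewrite !expr1.
rewrite !(exprS _ m.+1).
have ha : 0 <= a ^+ m.+1 by rewrite exprn_ge0.
have hb : 0 <= b ^+ m.+1 by rewrite exprn_ge0.
have hab : 0 <= a + b by rewrite addr_ge0.
apply: le_trans (ler_wpM2l hab IH).
have : 0 <= a * b ^+ m.+1 + b * a ^+ m.+1 by rewrite addr_ge0 // mulr_ge0.
lra.
Qed.

Lemma bound1 (p pi : R) k m : 0 < p -> p < 1 -> 0 < pi -> pi < 1/2 ->
  \sum_(N < k.+1) qb p k N * ((1 + (1 - 2 * pi) ^+ N) / 2) ^+ m <=
  (2 ^- m) * (1 + expR (- (k%:R * p * pi))
                 + 2 * expR (- (k%:R / m%:R * KL (p / 2) p))) ^+ m.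
Proof.
move=> p0 p1 pi0 pi1.
have g01 : forall N : nat, 0 <= (1 + (1 - 2 * pi) ^+ N) / 2 <= 1.
  move=> N; have h0 : 0 <= (1 - 2 * pi) ^+ N by rewrite exprn_ge0 //; lra.
  have h1 : (1 - 2 * pi) ^+ N <= 1 by rewrite exprn_ile1 //; lra.
  apply/andP; split; lra.
have qs1 : \sum_(N < k.+1) qb p k N = 1.
  have := qb_sum p 1 k; rewrite mulr1 subrK expr1n => <-.
  by apply: eq_bigr => N _; rewrite expr1n mulr1.
case: m => [|m].
  rewrite expr0 invr1 mul1r; under eq_bigr do rewrite expr0 mulr1; by rewrite qs1.
set A := 1 + expR (- (k%:R * p * pi)).
set E := expR (- (k%:R / m.+1%:R * KL (p / 2) p)).
have A0 : 0 <= A by rewrite /A addr_ge0 ?expR_ge0.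
have E0 : 0 <= E by rewrite expR_ge0.
apply: (@le_trans _ _ (\sum_(N < k.+1) (qb p k N * (A / 2) ^+ m.+1 +
     (if 2 * N%:R < k%:R * p then qb p k N else 0)))).
  apply: ler_sum => N _.
  have q0 : 0 <= qb p k N by apply: qb_ge0; lra.
  have hA : 0 <= qb p k N * (A / 2) ^+ m.+1 by rewrite mulr_ge0 ?exprn_ge0 ?divr_ge0.
  have /andP[g0 g1] := g01 N.
  case: ifP => hc.
    apply: le_trans (_ : qb p k N <= _); last lra.
    by rewrite -[X in _ <= X]mulr1 ler_wpM2l // exprn_ile1.
  rewrite addr0 ler_wpM2l // powle //.
  have hN : (1 - 2 * pi) ^+ N <= expR (- (k%:R * p * pi)).
    apply: (@le_trans _ _ (expR (- (2 * pi)) ^+ N)).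
      apply: powle; first lra.
      by apply: le_trans (expR_ge1Dx _); lra.
    rewrite -expRM_natl ler_expR.
    have : k%:R * p <= 2 * N%:R by rewrite leNgt hc.
    nra.
  rewrite /A; lra.
rewrite big_split /= -mulr_suml qs1 mul1r.
apply: (@le_trans _ _ ((A / 2) ^+ m.+1 + E ^+ m.+1)).
  rewrite lerD2l; apply: le_trans (chernoff k p0 p1) _.
  rewrite /E -expRM_natl le_eqVlt; apply/orP; left; apply/eqP; congr expR.
  by field; rewrite nat1r pnatr_eq0.
have A20 : 0 <= A / 2 by rewrite divr_ge0.
rewrite (_ : 2 ^- m.+1 * (A + 2 * E) ^+ m.+1 = (A / 2 + E) ^+ m.+1); first by apply: powadd.
by rewrite -exprVn -exprMn; congr (_ ^+ _); rewrite /A; field.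
Qed.
End Ana4.

Unset Implicit Arguments.

Theorem lemma5 (R : realType) (m n : nat) (p pi : R)
  (hp0 : 0 < p) (hp1 : p < 1) (hpi0 : 0 < pi) (hpi1 : pi < 1/2)
  (k : nat) (x : 'cV['F_2]_n)
  (hk1 : (1 <= k)%N) (hxk : cweight x = k) :
  prob_kernel m p pi x <=
    (2 ^- m) * (1 + expR (- (k%:R * p * pi))
                 + 2 * expR (- (k%:R / m%:R * KL (p / 2) p))) ^+ m
  /\
  (forall kstar : nat,
     kstar_cond m pi kstar ->
     (forall j : nat, kstar_cond m pi j -> (j <= kstar)%N) ->
     (k <= kstar)%N ->
     prob_kernel m p pi x <= expR (- (k%:R * m%:R * p * pi / 4))).
Proof.
rewrite formula2 hxk; split; first exact: bound1.
move=> ks [hs ht] _ hk.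
have b0 : 0 <= 2 * pi by lra.
have b1 : 2 * pi <= 1 by lra.
have [hks _] := @G1 R (2 * pi) ks b0 b1 hs.
apply: bound2 => //.
  apply: le_trans hs _; apply: ler_wiXn2l => //; lra.
apply: le_trans ht _; apply: powle.
  have : (1 <= ks)%N by apply: leq_trans hk.
  rewrite -(ler_nat R); lra.
have : (1 <= ks)%N by apply: leq_trans hk.
rewrite -(ler_nat R); nra.
Qed.
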